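(* Let $\mathcal H$ be a Hilbert space, $K$ a compact operator on $\mathcal H$, and $W:D(W)\to\mathcal H$ a closed bijective operator with dense domain (so $W^{-1}$ is bounded and injective with dense range). Assume $W^{-1}KW$ (on $D(W)$) has a bounded closure $B$ which is compact. Then $\sigma(B)=\sigma(K)$. *)

(* Defs.v *)
From HB Require Import structures.
From mathcomp Require Import all_boot all_order all_algebra.
From mathcomp Require Import all_classical all_reals all_analysis.
From mathcomp Require Import complex.
Set Implicit Arguments. Unset Strict Implicit. Unset Printing Implicit Defensive.
Import Order.TTheory GRing.Theory Num.Theory.
Import numFieldNormedType.Exports.
Local Open Scope classical_set_scope.
Local Open Scope ring_scope.

Section Defs.
Context (C : numClosedFieldType) (H : normedModType C).

(* ip is an inner product on H (linear in the first argument, conjugate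
   symmetric) inducing the norm of H:  <x,x> = |x|^2.  Together with
   completeness of H this makes H a Hilbert space. *)
Definition is_inner_product (ip : H -> H -> C) : Prop :=
  [/\ forall (a : C) (x y z : H), ip (a *: x + y) z = a * ip x z + ip y z,
      forall x y : H, ip y x = (ip x y)^* &
      forall x : H, ip x x = `|x| ^+ 2].

Definition compact_operator (T : H -> H) : Prop :=
  compact (closure (T @` [set x : H | `|x| <= 1])).

Definition lin_subspace (D : set H) : Prop :=
  D 0 /\ forall (a : C) (x y : H), D x -> D y -> D (a *: x + y).

Definition linear_on (D : set H) (W : H -> H) : Prop :=
  forall (a : C) (x y : H), D x -> D y -> W (a *: x + y) = a *: W x + W y.

Definition op_graph (D : set H) (W : H -> H) : set (H * H) :=
  [set p | D p.1 /\ p.2 = W p.1].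

(* graph of the operator W^{-1} K W, with domain D(W)
   (W : D -> H being bijective, W^{-1} is defined on all of H) *)
Definition conj_graph (D : set H) (W K : H -> H) : set (H * H) :=
  [set p | [/\ D p.1, D p.2 & W p.2 = K (W p.1)]].

Definition spectrum (T : H -> H) : set C :=
  [set l | ~ exists S : {linear H -> H}, [/\ continuous S,
       forall x, S (T x - l *: x) = x & forall x, T (S x) - l *: S x = x]].
End Defs.

(* Main.v *)
From HB Require Import structures.
From mathcomp Require Import all_boot all_order all_algebra.
From mathcomp Require Import all_classical all_reals all_analysis.
From mathcomp Require Import complex.
Require Import Defs.
From mathcomp Require Import ring lra.
Set Implicit Arguments. Unset Strict Implicit. Unset Printing Implicit Defensive.
Import Order.TTheory GRing.Theory Num.Theory.
Import numFieldNormedType.Exports.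
Local Open Scope classical_set_scope.
Local Open Scope ring_scope.
Local Open Scope complex_scope.

Section Nm.
Variables (R : realType) (H : normedModType R[i]).

Definition na (a : R[i]) : R := complex.Re `|a|.
Definition nm (v : H) : R := complex.Re `|v|.

Lemma naE a : `|a| = (na a)%:C.
Proof. by rewrite /na RRe_real ?normr_real. Qed.
Lemma nmE v : `|v| = (nm v)%:C.
Proof. by rewrite /nm RRe_real ?normr_real. Qed.
Lemma nm_ge0 v : 0 <= nm v.
Proof. by rewrite -ler0c -nmE. Qed.
Lemma na_ge0 a : 0 <= na a.
Proof. by rewrite -ler0c -naE. Qed.
Lemma nmD u v : nm (u + v) <= nm u + nm v.
Proof. by rewrite -lecR rmorphD /= -!nmE ler_normD. Qed.
Lemma nmN v : nm (- v) = nm v.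
Proof. by rewrite /nm normrN. Qed.
Lemma nmB u v : nm (u - v) = nm (v - u).
Proof. by rewrite /nm distrC. Qed.
Lemma nm0 : nm 0 = 0.
Proof. by rewrite /nm normr0. Qed.
Lemma nm_eq0 v : nm v = 0 -> v = 0.
Proof. move=> h; have : `|v| = 0 by rewrite nmE h. by move/normr0_eq0. Qed.
Lemma nmZ a v : nm (a *: v) = na a * nm v.
Proof. apply: (@complexI R); rewrite rmorphM /= -!nmE -naE; exact: normrZ. Qed.
Lemma na_gt0 a : a != 0 -> 0 < na a.
Proof. by move=> a0; rewrite -ltcR -naE normr_gt0. Qed.
Lemma naV a : na (a^-1) = (na a)^-1.
Proof. by apply: complexI; rewrite -naE normfV naE fmorphV. Qed.
Lemma naR (c : R) : 0 <= c -> na c%:C = c.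
Proof. by move=> c0; apply: complexI; rewrite -naE ger0_norm // ler0c. Qed.
Lemma na1 : na 1 = 1.
Proof. by rewrite /na normr1. Qed.
End Nm.
Lemma grp1 (V : zmodType) (c w y lz : V) : c - w - (c - lz - y) = lz - (w - y).
Proof.
rewrite !opprB (addrCA y) (addrCA (c - w)); congr (_ + _).
by rewrite addrC addrA addrNK.
Qed.

Lemma grp2 (V : zmodType) (cu cv lu lv : V) : cu - cv = lu - (lv + (cv - lv) - (cu - lu)).
Proof. by rewrite (addrC lv) subrK opprB addrA (addrC lu) subrK. Qed.

Section Gen.
Variables (R : realType) (H : normedModType R[i]).
Implicit Types (x y z v w : H) (f : H -> H) (M : set H).

Definition lin f := forall a x y, f (a *: x + y) = a *: f x + f y.
Definition sub M := M 0 /\ forall a x y, M x -> M y -> M (a *: x + y).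
Definition bnd f := exists K, 0 < K /\ forall x, nm (f x) <= K * nm x.
Definition SC f := forall (x : nat -> H) (b : R), (forall n, nm (x n) <= b) ->
  exists w, forall e, 0 < e -> forall N, exists2 n, (N <= n)%N & nm (f (x n) - w) < e.

Section LinF.
Variables (f : H -> H) (lf : lin f).
Lemma lin0 : f 0 = 0.
Proof.
have h := lf 1 0 0; rewrite !scale1r addr0 in h.
by apply: (@addrI _ (f 0)); rewrite addr0 -h.
Qed.
Lemma linD x y : f (x + y) = f x + f y.
Proof. by have := lf 1 x y; rewrite !scale1r. Qed.
Lemma linZ a x : f (a *: x) = a *: f x.
Proof. by have := lf a x 0; rewrite !addr0 lin0 addr0. Qed.
Lemma linN x : f (- x) = - f x.
Proof. by rewrite -scaleN1r linZ scaleN1r. Qed.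
Lemma linB x y : f (x - y) = f x - f y.
Proof. by rewrite linD linN. Qed.
Lemma lin_iter k : lin (iter k f).
Proof.
elim: k => [|k IH] a x y //=.
by rewrite IH lf.
Qed.
End LinF.

Section SubF.
Variables (M : set H) (sM : sub M).
Lemma subD x y : M x -> M y -> M (x + y).
Proof. by move=> hx hy; have := sM.2 1 x y hx hy; rewrite scale1r. Qed.
Lemma subZ a x : M x -> M (a *: x).
Proof. by move=> hx; have := sM.2 a x 0 hx sM.1; rewrite addr0. Qed.
Lemma subN x : M x -> M (- x).
Proof. by move=> hx; rewrite -scaleN1r; exact: subZ. Qed.
Lemma subB x y : M x -> M y -> M (x - y).
Proof. by move=> hx hy; apply: subD => //; exact: subN. Qed.
End SubF.

Lemma arch (e : R) : 0 < e -> exists N : nat, (N.+1%:R)^-1 < e.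
Proof.
move=> e0; exists (Num.bound (e^-1)).
have ei : 0 <= e^-1 by rewrite invr_ge0 ltW.
have h := archi_boundP ei.
rewrite -[X in _ < X]invrK ltf_pV2 ?posrE ?invr_gt0 // ?ltr0Sn //.
by apply: (lt_trans h); rewrite ltr_nat.
Qed.

Lemma arch_le (e : R) (N n : nat) : (N.+1%:R)^-1 < e -> (N <= n)%N -> (n.+1%:R)^-1 < e.
Proof.
move=> h Nn; apply: le_lt_trans h.
by rewrite lef_pV2 ?posrE ?ltr0Sn // ler_nat.
Qed.

Lemma nm_small (a : R) : 0 <= a -> (forall d, 0 < d -> a < d) -> a = 0.
Proof.
move=> a0 h; apply/eqP; rewrite eq_le a0 andbT; rewrite leNgt; apply/negP => ha.
have a2 : 0 < a / 2 by lra.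
have := h _ a2; lra.
Qed.

Lemma riesz M x (r : R) : sub M -> 0 < r -> (forall m, M m -> r <= nm (x - m)) ->
  exists m0 (t : R), [/\ M m0, r <= t, t = nm (x - m0),
     nm ((t^-1)%:C *: (x - m0)) = 1 &
     forall m, M m -> 1/2 <= nm ((t^-1)%:C *: (x - m0) - m)].
Proof.
move=> sM r0 hr.
pose S := [set nm (x - m) | m in M].
have neS : S (nm (x - 0)) by exists 0 => //; exact: sM.1.
have lbS : lbound S r by move=> s [m Mm <-]; exact: hr.
have hlS : has_lbound S by exists r.
have rd : r <= inf S by apply: lb_le_inf => //; exists (nm (x - 0)).
have d0 : 0 < inf S by exact: lt_le_trans rd.
have [s [m0 Mm0 <-] hs] := inf_adherent d0 (conj (ex_intro _ _ neS) hlS).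
set t := nm (x - m0).
have rt : r <= t by exact: hr.
have t0 : 0 < t by exact: lt_le_trans rt.
have naT : na (t^-1)%:C = t^-1 by rewrite naR // invr_ge0 ltW.
exists m0, t; split => //.
  by rewrite nmZ naT mulVf // gt_eqF.
move=> m Mm.
have -> : (t^-1)%:C *: (x - m0) - m = (t^-1)%:C *: (x - (m0 + t%:C *: m)).
  rewrite (opprD m0) addrA [RHS]scalerBr scalerA -rmorphM /= mulVf ?gt_eqF //.
  by rewrite scale1r.
have Mm' : M (m0 + t%:C *: m) by apply: subD => //; exact: subZ.
rewrite nmZ naT.
have : inf S <= nm (x - (m0 + t%:C *: m)) by apply: ge_inf => //; exists (m0 + t%:C *: m).
move=> hi.
have h2 : t < inf S + inf S by [].
set n := nm _ in hi *.
rewrite -(ler_pM2l t0) mulVKf ?gt_eqF //; lra.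
Qed.
End Gen.
Section Fred.
Variables (R : realType) (H : normedModType R[i]).
Variables (C : H -> H) (l : R[i]).
Hypotheses (hl : l != 0) (linC : lin C) (SCC : SC C).
Variables (K0 : R) (K00 : 0 < K0) (bndC : forall x, nm (C x) <= K0 * nm x).

Let A x := C x - l *: x.
Let KA := K0 + na l.

Lemma linA : lin A.
Proof.
move=> a x y; rewrite /A linC scalerDr scalerA mulrC -scalerA.
by rewrite opprD addrACA scalerBr.
Qed.

Lemma bndA x : nm (A x) <= KA * nm x.
Proof.
rewrite /A /KA mulrDl; apply: (le_trans (nmD _ _)).
by rewrite nmN nmZ lerD.
Qed.

Lemma KA0 : 0 < KA.
Proof. by apply: (lt_le_trans K00); rewrite lerDl; exact: na_ge0. Qed.

Lemma naVl : 0 < na (l^-1).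
Proof. by apply: na_gt0; rewrite invr_eq0. Qed.

Lemma Glem (y w : H) (z : nat -> H) :
  (forall e, 0 < e -> exists n, nm (C (z n) - w) < e /\ nm (A (z n) - y) < e) ->
  A (l^-1 *: (w - y)) = y /\
  forall e, 0 < e -> exists n, nm (z n - l^-1 *: (w - y)) < e.
Proof.
move=> hz; set u := l^-1 *: (w - y).
have est n : nm (z n - u) <= na (l^-1) * (nm (C (z n) - w) + nm (A (z n) - y)).
  have -> : z n - u = l^-1 *: ((C (z n) - w) - (A (z n) - y)).
    by rewrite /u /A grp1 [RHS]scalerBr scalerA mulVf // scale1r.
  rewrite nmZ ler_wpM2l ?na_ge0 //.
  by apply: (le_trans (nmD _ _)); rewrite nmN.
have L0 := naVl.
split; last first.
  move=> e e0.
  have e'0 : 0 < e / (2 * na l^-1) by apply: divr_gt0 => //; lra.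
  have [n [h1 h2]] := hz _ e'0; exists n.
  apply: (le_lt_trans (est n)).
  have : na l^-1 * (e / (2 * na l^-1)) = e / 2 by field; lra.
  move=> heq.
  apply: (@lt_le_trans _ _ (na l^-1 * (e / (2 * na l^-1) + e / (2 * na l^-1)))).
    by rewrite ltr_pM2l // ltrD.
  by rewrite mulrDr heq; lra.
apply/eqP; rewrite -subr_eq0; apply/eqP; apply: nm_eq0.
apply: nm_small; first exact: nm_ge0.
move=> d d0.
set Q := 2 * KA * na l^-1 + 2.
have Q0 : 0 < Q by have := KA0; rewrite /Q; nra.
have e0 : 0 < d / Q by exact: divr_gt0.
have [n [h1 h2]] := hz _ e0.
have eQ : d / Q * Q = d by rewrite divfK // gt_eqF.
have hA : A u - y = A (u - z n) + (A (z n) - y).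
  by rewrite (linB linA) addrA addrNK.
rewrite hA; apply: (le_lt_trans (nmD _ _)).
apply: (@le_lt_trans _ _ (KA * (na l^-1 * (d / Q + d / Q)) + d / Q)).
  apply: lerD; last exact: ltW.
  apply: (le_trans (bndA _)); rewrite ler_wpM2l ?(ltW KA0) // nmB.
  apply: (le_trans (est n)); rewrite ler_wpM2l ?na_ge0 //.
  by apply: lerD; apply: ltW.
move: eQ e0; rewrite /Q; set e := d / _ => eQ e0.
have -> : KA * (na l^-1 * (e + e)) + e = d - e by rewrite -eQ; ring.
lra.
Qed.

Lemma subA : sub [set n | A n = 0].
Proof.
split; first exact: (lin0 linA).
by move=> a x y /= hx hy; rewrite linA hx hy scaler0 addr0.
Qed.

Lemma invS_gt0 (k : nat) : 0 < (k.+1%:R : R)^-1.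
Proof. by rewrite invr_gt0 ltr0Sn. Qed.

Lemma invS_le1 (k : nat) : (k.+1%:R : R)^-1 <= 1.
Proof. by rewrite invf_le1 ?ltr0Sn // ler1n. Qed.

Lemma Qlem : exists M, 0 < M /\ forall x, exists2 n, A n = 0 & nm (x - n) <= M * nm (A x).
Proof.
case: (pselect (exists M, 0 < M /\ forall x, exists2 n, A n = 0 & nm (x - n) <= M * nm (A x))) => // hQ.
exfalso.
have hk : forall k : nat, exists z, [/\ nm z = 1, forall n, A n = 0 -> 1/2 <= nm (z - n)
    & nm (A z) <= (k.+1%:R)^-1].
  move=> k.
  have [x hx] : exists x, forall n, A n = 0 -> k.+1%:R * nm (A x) < nm (x - n).
    apply: contrapT => hx'; apply: hQ; exists k.+1%:R; split; first by rewrite ltr0Sn.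
    move=> x; apply: contrapT => hn; apply: hx'; exists x => n An.
    rewrite ltNge; apply/negP => hle; apply: hn; by exists n.
  set a := nm (A x) in hx.
  have a0 : 0 < a.
    rewrite lt_neqAle nm_ge0 andbT; apply/negP => /eqP a0'.
    have Ax0 : A x = 0 by apply: nm_eq0; rewrite -/a -a0'.
    by have := hx x Ax0; rewrite -a0' mulr0 subrr nm0 ltxx.
  have r0 : 0 < k.+1%:R * a by rewrite mulr_gt0 ?ltr0Sn.
  have [m0 [t [Mm0 rt tE hz1 hz2]]] :=
    riesz (M := [set n | A n = 0]) (x := x) subA r0 (fun m Am => ltW (hx m Am)).
  exists ((t^-1)%:C *: (x - m0)); split => //.
  have t0 : 0 < t by exact: lt_le_trans rt.
  rewrite (linZ linA) (linB linA) Mm0 subr0 nmZ naR ?invr_ge0 ?ltW //.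
  rewrite -/a -(ltr_pM2l t0) mulVKf ?gt_eqF //.
  rewrite ltr_pdivlMr ?ltr0Sn // mulrC tE.
  exact: hx.
have [zs hzs] := choice hk.
have hb : forall n, nm (zs n) <= 1 by move=> n; case: (hzs n) => -> _ _.
have [w hw] := SCC hb.
have hG : forall e, 0 < e -> exists n, nm (C (zs n) - w) < e /\ nm (A (zs n) - 0) < e.
  move=> e e0.
  have [N hN] := arch e0; have [n Nn hn] := hw e e0 N; exists n; split => //.
  rewrite subr0; case: (hzs n) => _ _ h; apply: le_lt_trans h (arch_le hN Nn).
have [hu hz] := Glem hG.
have [n hn] := hz (1/2) (ltac:(lra)).
case: (hzs n) => _ h2 _.
by have := h2 _ hu; lra.
Qed.

Lemma L2 y : (forall e, 0 < e -> exists z, nm (y - A z) < e) -> exists x, A x = y.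
Proof.
move=> hy.
have [M [M0 hM]] := Qlem.
have hk : forall k : nat, exists x, nm x <= M * (nm y + 1) /\ nm (y - A x) < (k.+1%:R)^-1.
  move=> k; have [z hz] := hy _ (invS_gt0 k).
  have [n An hn] := hM z.
  exists (z - n); rewrite (linB linA) An subr0; split => //.
  apply: (le_trans hn); rewrite ler_wpM2l ?ltW //.
  have -> : A z = y - (y - A z) by rewrite opprB addrC addrNK.
  apply: (le_lt_trans (nmD _ _)); rewrite nmN ltrD2l.
  by apply: (lt_le_trans hz); exact: invS_le1.
have [xs hxs] := choice hk.
have hb : forall n, nm (xs n) <= M * (nm y + 1) by move=> n; exact: (hxs n).1.
have [w hw] := SCC hb.
have hG : forall e, 0 < e -> exists n, nm (C (xs n) - w) < e /\ nm (A (xs n) - y) < e.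
  move=> e e0.
  have [N hN] := arch e0; have [n Nn hn] := hw e e0 N; exists n; split => //.
  rewrite nmB; apply: lt_trans (hxs n).2 (arch_le hN Nn).
have [hu _] := Glem hG.
by exists (l^-1 *: (w - y)).
Qed.

Lemma BB : (forall x, A x = 0 -> x = 0) -> exists M, 0 < M /\ forall x, nm x <= M * nm (A x).
Proof.
move=> inj; have [M [M0 hM]] := Qlem; exists M; split => // x.
by have [n /inj -> ] := hM x; rewrite subr0.
Qed.

Lemma Sep (y : nat -> H) (b e : R) : (forall n, nm (y n) <= b) -> 0 < e ->
  (forall j k, (j < k)%N -> e <= nm (C (y j) - C (y k))) -> False.
Proof.
move=> hb e0 hs.
have [w hw] := SCC hb.
have e2 : 0 < e / 2 by lra.
have [n _ h1] := hw _ e2 0%N.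
have [m nm_ h2] := hw _ e2 n.+1.
have := hs n m nm_.
have -> : C (y n) - C (y m) = (C (y n) - w) + (w - C (y m)) by rewrite addrA subrK.
move=> h; have := le_trans h (nmD _ _); rewrite (nmB w); lra.
Qed.

Lemma ident u v : C u - C v = l *: (u - l^-1 *: (l *: v + A v - A u)).
Proof. by rewrite [RHS]scalerBr scalerA mulfV // scale1r /A -grp2. Qed.

Lemma sep_bound u v (S : set H) : sub S -> S (l^-1 *: (l *: v + A v - A u)) ->
  (forall m, S m -> 1/2 <= nm (u - m)) -> na l / 2 <= nm (C u - C v).
Proof.
move=> sS hm hu; rewrite ident nmZ.
have := hu _ hm; have := na_gt0 hl; nra.
Qed.

Lemma iter_bnd k v : nm (iter k A v) <= KA ^+ k * nm v.
Proof.
elim: k => [|k IH] /=; first by rewrite expr0 mul1r.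
apply: (le_trans (bndA _)); rewrite exprS -mulrA ler_wpM2l ?(ltW KA0) //.
Qed.

Lemma F3 : (forall y, exists x, A x = y) -> forall x, A x = 0 -> x = 0.
Proof.
move=> surj x0 Ax0; apply: contrapT => x0n.
have [g hg] := choice surj.
pose N k := [set v | iter k A v = 0].
have linI k := lin_iter linA k.
have subN k : sub (N k).
  split; first exact: (lin0 (linI k)).
  by move=> a x y; rewrite /N /= => hx hy; rewrite linI hx hy scaler0 addr0.
have Nmono a b : (a <= b)%N -> N a `<=` N b.
  move=> ab v; rewrite /N /= => hv; rewrite -(subnK ab) iterD hv.
  exact: (lin0 (linI _)).
pose xs k := iter k g x0.
have hx k : iter k A (xs k) = x0.
  elim: k => [|k IH] //.
  by rewrite /xs iterSr /= hg.
have nx0 : 0 < nm x0.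
  rewrite lt_neqAle nm_ge0 andbT; apply/negP => /eqP h; apply: x0n; exact: nm_eq0.
have hk : forall k, exists z, [/\ nm z = 1, N k.+1 z & forall m, N k m -> 1/2 <= nm (z - m)].
  move=> k.
  have Kk : 0 < KA ^+ k by rewrite exprn_gt0 // KA0.
  have r0 : 0 < nm x0 / KA ^+ k by exact: divr_gt0.
  have hr : forall m, N k m -> nm x0 / KA ^+ k <= nm (xs k - m).
    move=> m; rewrite /N /= => hm.
    rewrite ler_pdivrMr // mulrC.
    have <- : iter k A (xs k - m) = x0 by rewrite (linB (linI k)) hx hm subr0.
    exact: iter_bnd.
  have [m0 [t [Mm0 rt tE hz1 hz2]]] := riesz (subN k) r0 hr.
  exists ((t^-1)%:C *: (xs k - m0)); split => //.
  rewrite /N /= (linZ (linI _)) (linB (linI _)) /= hx.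
  move: Mm0; rewrite /N /= => Mm0.
  by rewrite Mm0 subr0 (linZ linA) Ax0 scaler0.
have [ys hys] := choice hk.
have hb : forall n, nm (ys n) <= 1 by move=> n; case: (hys n) => -> _ _.
apply: (Sep hb (e := na l / 2)); first by have := na_gt0 hl; lra.
move=> j k jk; rewrite nmB.
case: (hys k) => _ _ hk'.
apply: (sep_bound (S := N k)) => //.
case: (hys j) => _ hj _.
have hjk : N j.+1 `<=` N k by exact: Nmono.
have hAj : N k (A (ys j)).
  rewrite /N /= -iterSr; apply: (Nmono j.+1) => //; exact: ltnW.
have hAk : N k (A (ys k)).
  by rewrite /N /= -iterSr; case: (hys k).
apply: subZ => //; apply: subB => //; apply: subD => //; apply: subZ => //.
exact: hjk.
Qed.

Lemma F2 : (forall x, A x = 0 -> x = 0) -> forall y, exists x, A x = y.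
Proof.
move=> inj y0; apply: contrapT => ny0.
have [r [r0 hr]] : exists r, 0 < r /\ forall z, r <= nm (y0 - A z).
  apply: contrapT => hn; apply: ny0; apply: L2 => e e0; apply: contrapT => he.
  apply: hn; exists e; split => // z; rewrite leNgt; apply/negP => hz; apply: he.
  by exists z.
have [M [M0 hM]] := BB inj.
have linI k := lin_iter linA k.
have hMk k v : nm v <= M ^+ k * nm (iter k A v).
  elim: k v => [|k IH] v /=; first by rewrite expr0 mul1r.
  apply: (le_trans (IH _)); rewrite exprSr -mulrA ler_pM2l ?exprn_gt0 //.
pose Rg k := [set w | exists v, w = iter k A v].
have subR k : sub (Rg k).
  split; first by exists 0; rewrite (lin0 (linI k)).
  by move=> a x y [v1 ->] [v2 ->]; exists (a *: v1 + v2); rewrite linI.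
have Rmono a b : (a <= b)%N -> Rg b `<=` Rg a.
  by move=> ab w [v ->]; exists (iter (b - a) A v); rewrite -iterD subnKC.
pose xs k := iter k A y0.
have hk : forall k, exists z, [/\ nm z = 1, Rg k z & forall m, Rg k.+1 m -> 1/2 <= nm (z - m)].
  move=> k.
  have Mk : 0 < M ^+ k by rewrite exprn_gt0.
  have r'0 : 0 < r / M ^+ k by exact: divr_gt0.
  have hr' : forall m, Rg k.+1 m -> r / M ^+ k <= nm (xs k - m).
    move=> m [v ->]; rewrite iterSr -(linB (linI k)) ler_pdivrMr // mulrC.
    exact: le_trans (hr v) (hMk _ _).
  have [m0 [t [[v0 Mm0] rt tE hz1 hz2]]] := riesz (subR k.+1) r'0 hr'.
  exists ((t^-1)%:C *: (xs k - m0)); split => //.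
  exists ((t^-1)%:C *: (y0 - A v0)).
  by rewrite (linZ (linI _)) (linB (linI _)) Mm0 iterSr.
have [ys hys] := choice hk.
have hb : forall n, nm (ys n) <= 1 by move=> n; case: (hys n) => -> _ _.
apply: (Sep hb (e := na l / 2)); first by have := na_gt0 hl; lra.
move=> j k jk.
case: (hys j) => _ [vj ->] hj.
apply: (sep_bound (S := Rg j.+1)) => //.
case: (hys k) => _ [vk ->] _.
apply: subZ => //; apply: subB => //; first apply: subD => //.
- apply: subZ => //; apply: (Rmono j.+1 k) => //; by exists vk.
- apply: (Rmono j.+1 k.+1); first exact: ltnW.
  by exists vk.
- by exists vj.
Qed.
End Fred.
Section Ops.
Variables (R : realType) (H : normedModType R[i]).

Lemma bnd_cont (f : {linear H -> H}) (M : R) : (forall x, nm (f x) <= M * nm x) -> continuous f.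
Proof.
move=> hf; apply: bounded_linear_continuous; apply/linear_boundedP.
exists (M%:C); split; first by apply/complex_realP; exists M.
move=> r Mr x; rewrite !nmE.
apply: (@le_trans _ _ (M%:C * (nm x)%:C)).
  by rewrite -rmorphM lecR; exact: hf.
by rewrite ler_wpM2r ?ler0c ?nm_ge0 // ltW.
Qed.

Lemma cont_bnd (f : {linear H -> H}) : continuous f -> exists K, 0 < K /\ forall x, nm (f x) <= K * nm x.
Proof.
move=> /(_ 0) /continuous_linear_bounded /linear_boundedP [M [Mr hM]].
have hr : (M + 1) \is Num.real by rewrite realD // real1.
have Mlt : M < M + 1 by rewrite ltrDl ltr01.
have h := hM (M + 1) Mlt.
rewrite -(RRe_real hr) in h.
exists (Num.max (complex.Re (M + 1)) 1); split; first by rewrite lt_max ltr01 orbT.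
move=> x; apply: (@le_trans _ _ (complex.Re (M + 1) * nm x)).
  by rewrite -lecR rmorphM /= -!nmE h.
by rewrite ler_wpM2r ?nm_ge0 // le_max lexx.
Qed.

Lemma linL (f : {linear H -> H}) : lin f.
Proof. by move=> a x y; rewrite linearP. Qed.

Lemma cpt_SC (f : {linear H -> H}) :
  compact (closure (f @` [set x : H | `|x| <= 1])) -> SC f.
Proof.
move=> hc x b hb.
set c := Num.max b 1.
have c0 : 0 < c by rewrite lt_max ltr01 orbT.
have bc : b <= c by rewrite le_max lexx.
pose x' n := (c^-1)%:C *: x n.
have nx' n : `|x' n| <= 1.
  have ci : 0 <= c^-1 by rewrite invr_ge0 ltW.
  rewrite nmE -(rmorph1 (real_complex R)) lecR /x' nmZ (naR ci).
  rewrite ler_pdivrMl // mulr1; exact: le_trans (hb n) bc.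
pose F := (fun n => f (x' n)) @ \oo.
have Fc : F (closure (f @` [set x : H | `|x| <= 1])).
  exists 0%N => // n _; rewrite /preimage /=; apply: subset_closure; exists (x' n) => //; exact: nx'.
have [p [_ clp]] := hc F _ Fc.
exists (c%:C *: p) => e e0 N.
have ec0 : 0 < (e / c)%:C by rewrite ltcR divr_gt0.
have FN : F [set v | exists2 n, (N <= n)%N & v = f (x' n)].
  by exists N => // n /= Nn; exists n.
have [v [[n Nn ->] hv]] := clp _ _ FN (nbhsx_ballx p _ ec0).
exists n => //.
move: hv; rewrite -ball_normE /= nmE ltcR => hv.
have -> : f (x n) - c%:C *: p = c%:C *: (f (x' n) - p).
  rewrite scalerBr /x' (linZ (linL f)) scalerA -rmorphM /= mulfV ?gt_eqF // scale1r.
  done.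
rewrite nmZ (naR (ltW c0)) nmB.
by rewrite -ltr_pdivlMl // mulrC.
Qed.

Lemma SC_id (f g : H -> H) (M : R) : SC f -> 0 < M -> (forall x, nm (g x) <= M * nm x) ->
  (forall x, f (g x) = x) -> SC (fun x : H => x).
Proof.
move=> hf M0 hg fg x b hb.
have hb' : forall n, nm (g (x n)) <= M * b.
  move=> n; apply: le_trans (hg _) _; rewrite ler_pM2l //.
have [w hw] := hf _ _ hb'.
exists w => e e0 N; have [n Nn hn] := hw e e0 N; exists n => //.
by rewrite fg in hn.
Qed.

Lemma SC_of_id (f : H -> H) (M : R) : SC (fun x : H => x) -> lin f -> 0 < M ->
  (forall x, nm (f x) <= M * nm x) -> SC f.
Proof.
move=> hid lf M0 hf x b hb.
have [w hw] := hid _ _ hb.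
exists (f w) => e e0 N.
have eM : 0 < e / M by exact: divr_gt0.
have [n Nn hn] := hw _ eM N; exists n => //.
rewrite -(linB lf); apply: le_lt_trans (hf _) _.
by rewrite -ltr_pdivlMl // mulrC.
Qed.

Lemma inv_ex (A : H -> H) : lin A -> (forall x, A x = 0 -> x = 0) -> (forall y, exists x, A x = y) ->
  (exists M, 0 < M /\ forall x, nm x <= M * nm (A x)) ->
  exists S : {linear H -> H}, [/\ continuous S, forall x, S (A x) = x & forall x, A (S x) = x].
Proof.
move=> lA inj surj [M [M0 hM]].
have [g hg] := choice surj.
have Ainj u v : A u = A v -> u = v.
  move=> e; apply/eqP; rewrite -subr_eq0; apply/eqP; apply: inj.
  by rewrite (linB lA) e subrr.
have lg : linear g.
  move=> a u v; apply: Ainj; by rewrite lA !hg.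
pose S : {linear H -> H} := HB.pack g (GRing.isLinear.Build _ _ _ _ g lg).
exists S; split.
- apply: (@bnd_cont S M) => x /=.
  by have := hM (g x); rewrite hg.
- by move=> x /=; apply: Ainj; rewrite hg.
- by move=> x /=; rewrite hg.
Qed.
End Ops.
Section Wrap.
Variables (R : realType) (H : normedModType R[i]).

Definition invertible_at (T : H -> H) (l : R[i]) := exists S : {linear H -> H},
  [/\ continuous S, forall x, S (T x - l *: x) = x & forall x, T (S x) - l *: S x = x].

Lemma fred_inj (C : H -> H) (l : R[i]) (K0 : R) : l != 0 -> lin C -> SC C -> 0 < K0 ->
  (forall x, nm (C x) <= K0 * nm x) ->
  (forall x, C x - l *: x = 0 -> x = 0) -> invertible_at C l.
Proof.
move=> hl lC sC K00 bC inj.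
have [S [h1 h2 h3]] := inv_ex (linA l lC) inj (F2 hl lC sC K00 bC inj) (BB hl lC sC K00 bC inj).
by exists S.
Qed.

Lemma fred_surj (C : H -> H) (l : R[i]) (K0 : R) : l != 0 -> lin C -> SC C -> 0 < K0 ->
  (forall x, nm (C x) <= K0 * nm x) ->
  (forall y, exists x, C x - l *: x = y) -> invertible_at C l.
Proof.
move=> hl lC sC K00 bC surj.
exact: fred_inj hl lC sC K00 bC (F3 hl lC sC K00 bC surj).
Qed.
End Wrap.

Theorem mainTheorem12 (R : realType) (H : completeNormedModType R[i])
  (ip : H -> H -> R[i]) (K : {linear H -> H}) (D : set H) (W : H -> H)
  (B : {linear H -> H}) :
  is_inner_product ip ->
  continuous K -> compact_operator K ->
  lin_subspace D -> closure D = setT -> linear_on D W ->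
  closed (op_graph D W) ->
  {in D &, injective W} -> (forall y : H, exists2 x, D x & W x = y) ->
  closure (conj_graph D W K) = op_graph setT B ->
  continuous B -> compact_operator B ->
  spectrum B = spectrum K.
Proof.
move=> hip hKc hKcomp hDsub hDdense hWlin hWclosed hWinj hWsurj hclos hBc hBcomp.
have lK := linL K; have lB := linL B.
have SCK := cpt_SC hKcomp; have SCB := cpt_SC hBcomp.
have [MK [MK0 bK]] := cont_bnd hKc; have [MB [MB0 bB]] := cont_bnd hBc.
have hs : forall y, exists x, D x /\ W x = y.
  by move=> y; case: (hWsurj y) => x ? ?; exists x.
have [T hT] := choice hs.
have DT y : D (T y) := (hT y).1.
have WT y : W (T y) = y := (hT y).2.
have TW x : D x -> T (W x) = x.
  move=> Dx; apply: hWinj; [apply: mem_set; exact: DT|apply: mem_set; exact: Dx|exact: WT].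
have linT : lin T.
  move=> a x y; apply: hWinj; [apply: mem_set; exact: DT|apply: mem_set|].
    by apply: hDsub.2; exact: DT.
  by rewrite WT hWlin ?DT // !WT.
have key y : B (T y) = T (K y).
  have : closure (conj_graph D W K) (T y, T (K y)).
    by apply: subset_closure; split => /=; [exact: DT|exact: DT|rewrite !WT].
  by rewrite hclos => -[_ /= ->].
have dens y e : 0 < e -> exists2 x, D x & nm (y - x) < e.
  move=> e0; have : closure D y by rewrite hDdense.
  have ec : 0 < e%:C by rewrite ltcR.
  move=> /(_ _ (nbhsx_ballx y _ ec)) [x [Dx bx]]; exists x => //.
  by move: bx; rewrite -ball_normE /= nmE ltcR.
have T0 : T 0 = 0 := lin0 linT.
suff keyeq : forall l, invertible_at K l <-> invertible_at B l.
  apply/seteqP; split => l; rewrite /spectrum /= => h1 h2; apply: h1.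
    by apply/keyeq; exact: h2.
  by apply/keyeq; exact: h2.
move=> l; split.
- case=> S [Sc SK KS].
  have [MS [MS0 bS]] := cont_bnd Sc.
  case: (eqVneq l 0) => [l0|l0].
  + subst l.
    have KS' z : K (S z) = z by have := KS z; rewrite scale0r subr0.
    have SCid := SC_id SCK MS0 bS KS'.
    pose C := fun x => B x + x.
    have linC : lin C.
      by move=> a x y; rewrite /C lB scalerDr addrACA.
    have MB10 : 0 < MB + 1 by lra.
    have bC x : nm (C x) <= (MB + 1) * nm x.
      by apply: (le_trans (nmD _ _)); rewrite mulrDl mul1r lerD.
    have SCC := SC_of_id SCid linC MB10 bC.
    have CB x : C x - 1 *: x = B x by rewrite scale1r /C addrK.
    have surj : forall y, exists x, C x - 1 *: x = y.
      move=> y; apply: (L2 (oner_neq0 _) linC SCC MB10 bC) => e e0.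
      have [x Dx hx] := dens y e e0.
      by exists (T (S (W x))); rewrite CB key KS' TW.
    have [S' [S'c h1 h2]] := fred_surj (oner_neq0 _) linC SCC MB10 bC surj.
    exists S'; split => // x; rewrite scale0r subr0.
      by have := h1 x; rewrite CB.
    by have := h2 x; rewrite CB.
  + have surj : forall y, exists x, B x - l *: x = y.
      move=> y; apply: (L2 l0 lB SCB MB0 bB) => e e0.
      have [x Dx hx] := dens y e e0.
      exists (T (S (W x))).
      by rewrite key -(linZ linT) -(linB linT) KS TW.
    exact: fred_surj l0 lB SCB MB0 bB surj.
- case=> S [Sc SB BS].
  have [MS [MS0 bS]] := cont_bnd Sc.
  have Tinj x : T x = 0 -> x = 0 by move=> h; rewrite -(WT x) h -T0 WT.
  case: (eqVneq l 0) => [l0|l0].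
  + subst l.
    have BS' z : B (S z) = z by have := BS z; rewrite scale0r subr0.
    have SB' z : S (B z) = z by have := SB z; rewrite scale0r subr0.
    have SCid := SC_id SCB MS0 bS BS'.
    pose C := fun x => K x + x.
    have linC : lin C.
      by move=> a x y; rewrite /C lK scalerDr addrACA.
    have MK10 : 0 < MK + 1 by lra.
    have bC x : nm (C x) <= (MK + 1) * nm x.
      by apply: (le_trans (nmD _ _)); rewrite mulrDl mul1r lerD.
    have SCC := SC_of_id SCid linC MK10 bC.
    have CK x : C x - 1 *: x = K x by rewrite scale1r /C addrK.
    have inj : forall x, C x - 1 *: x = 0 -> x = 0.
      move=> x; rewrite CK => hx; apply: Tinj.
      by rewrite -(SB' (T x)) key hx T0 linear0.
    have [S' [S'c h1 h2]] := fred_inj (oner_neq0 _) linC SCC MK10 bC inj.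
    exists S'; split => // x; rewrite scale0r subr0.
      by have := h1 x; rewrite CK.
    by have := h2 x; rewrite CK.
  + have inj : forall x, K x - l *: x = 0 -> x = 0.
      move=> x hx; apply: Tinj.
      by rewrite -(SB (T x)) key -(linZ linT) -(linB linT) hx T0 linear0.
    exact: fred_inj l0 lK SCK MK0 bK inj.
Qed.
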